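(* Consider the algorithm described below (Algorithm A) for a real Hilbert space $H$, a nonempty closed convex set $C\subseteq H$ and a mapping $F\colon H\to H$ that is monotone and Lipschitz continuous with constant $L>0$, where the solution set $S$ of the variational inequality ''find $x^*\in C$ with $\langle F(x^* ),x-x^*\rangle\ge0$ for all $x\in C$'' is nonempty. Let $(x_n)$, $(y_n)$, $(\lambda_n)$ be the sequences generated by Algorithm A (with their final values after any modification in Step 4), with $\alpha\in(0,\sqrt2-1)$, and let $z\in S$. Then for every $n\ge1$, $$\|x_{n+1}-z\|^2\le\|x_n-z\|^2-(1-\alpha(1+\sqrt2))\|x_n-y_n\|^2-(1-\sqrt2\alpha)\|x_{n+1}-y_n\|^2+\alpha\|x_n-y_{n-1}\|^2-2\lambda_n\langle F(z),y_n-z\rangle.$$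
   Context: Convention: $0/0=+\infty$ and $1/0=+\infty$. $P_C$ is the metric projection onto $C$. Algorithm A: Step 1. Choose $x_0\in C$, $\lambda_{-1}>0$, $\theta_0=1$, $\alpha\in(0,\sqrt2-1)$ and $\bar\lambda>0$. Compute $y_0=P_C(x_0-\lambda_{-1}F(x_0))$, $\lambda_0=\min\{\alpha\|x_0-y_0\|/\|F(x_0)-F(y_0)\|,\bar\lambda\}$, $x_1=P_C(x_0-\lambda_0F(y_0))$. Step 2 (for $n\ge1$). Set $\theta_n=1$ and define, for $y\in H$, $\theta>0$, $\lambda(y,\theta)=\min\{\alpha\|y-y_{n-1}\|/\|F(y)-F(y_{n-1})\|,\ \frac{1+\theta_{n-1}}{\theta}\lambda_{n-1},\ \bar\lambda\}$. Compute $y_n=2x_n-x_{n-1}$, $\lambda_n=\lambda(y_n,\theta_n)$, $x_{n+1}=P_C(x_n-\lambda_nF(y_n))$. Step 3. If $\|y_n-P_C(x_n-\lambda_nF(y_n))\|+\|x_n-y_n\|=0$, stop ($x_n$ is a solution). Otherwise compute $t_n=-\|x_{n+1}-x_n\|^2+2\lambda_n\langle F(y_n),y_n-x_{n+1}\rangle+(1-\alpha(1+\sqrt2))\|x_n-y_n\|^2-\alpha\|x_n-y_{n-1}\|^2+(1-\sqrt2\alpha)\|x_{n+1}-y_n\|^2$. Step 4. If $t_n\le0$, go to Step 2 with $n:=n+1$. Otherwise: (i) if $\lambda_n\ge\lambda_{n-1}$, choose $\lambda_n'\in[\lambda_{n-1},\lambda_n]$ with $\|\lambda_n'F(y_n)-\lambda_{n-1}F(y_{n-1})\|\le\alpha\|y_n-y_{n-1}\|$,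 recompute $x_{n+1}=P_C(x_n-\lambda_n'F(y_n))$, set $\lambda_n:=\lambda_n'$, $n:=n+1$, go to Step 2; (ii) if $\lambda_n<\lambda_{n-1}$, find $\theta_n'\in(0,1]$ such that, with $y_n'=x_n+\theta_n'(x_n-x_{n-1})$, one has $\lambda(y_n',\theta_n')\ge\theta_n'\lambda_{n-1}$; then choose $\lambda_n'\in[\theta_n'\lambda_{n-1},\lambda(y_n',\theta_n')]$ with $\|\lambda_n'F(y_n')-\theta_n'\lambda_{n-1}F(y_{n-1})\|\le\alpha\|y_n'-y_{n-1}\|$, recompute $x_{n+1}=P_C(x_n-\lambda_n'F(y_n'))$, set $\lambda_n:=\lambda_n'$, $\theta_n:=\theta_n'$, $y_n:=y_n'$, $n:=n+1$, go to Step 2. *)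

(* Defs.v *)
From HB Require Import structures.
From mathcomp Require Import all_boot all_order all_algebra.
From mathcomp Require Import all_classical all_reals all_analysis.
Set Implicit Arguments. Unset Strict Implicit. Unset Printing Implicit Defensive.
Import Order.TTheory GRing.Theory Num.Theory.
Import numFieldNormedType.Exports.
Local Open Scope classical_set_scope.
Local Open Scope ring_scope.

(* A real Hilbert space: a complete normed space H over R whose norm comes from
   the inner product ip (symmetric, linear in the first argument, <x,x> = |x|^2). *)
Definition is_inner_product (R : realType) (H : normedModType R)
  (ip : H -> H -> R) : Prop :=
  [/\ (forall x y, ip x y = ip y x),
      (forall (a : R) x y z, ip (a *: x + y) z = a * ip x z + ip y z) &
      (forall x, ip x x = `|x| ^+ 2)].

Definition monotone_op (R : realType) (H : normedModType R)
  (ip : H -> H -> R) (F : H -> H) : Prop :=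
  forall x y, 0 <= ip (F x - F y) (x - y).

Definition lipschitz_op (R : realType) (H : normedModType R)
  (F : H -> H) (L : R) : Prop :=
  forall x y, `|F x - F y| <= L * `|x - y|.

Definition VI_sol (R : realType) (H : normedModType R)
  (ip : H -> H -> R) (C : set H) (F : H -> H) (z : H) : Prop :=
  C z /\ forall x, C x -> 0 <= ip (F z) (x - z).

Definition is_proj (R : realType) (H : normedModType R) (C : set H) (v p : H) : Prop :=
  C p /\ forall c, C c -> `|v - p| <= `|v - c|.

Definition projC (R : realType) (H : normedModType R) (C : set H) (v : H) : H :=
  xget v [set p | is_proj C v p].

(* min{a/b, c} with the convention a/0 = +oo (a >= 0 in all uses) *)
Definition min_div (R : realType) (a b c : R) : R :=
  if b == 0 then c else Num.min (a / b) c.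

Section AlgA.
Variables (R : realType) (H : normedModType R) (ip : H -> H -> R)
  (C : set H) (F : H -> H) (alpha lbar : R)
  (x y : nat -> H) (lam theta : nat -> R).

(* Step 1 (with lam_m1 = lambda_{-1}) *)
Definition AlgA_init (lam_m1 : R) : Prop :=
  [/\ C (x 0%N), theta 0%N = 1,
      y 0%N = projC C (x 0%N - lam_m1 *: F (x 0%N)),
      lam 0%N = min_div (alpha * `|x 0%N - y 0%N|) `|F (x 0%N) - F (y 0%N)| lbar &
      x 1%N = projC C (x 0%N - lam 0%N *: F (y 0%N))].

(* lambda(u, th) at iteration n (uses final values at index n-1) *)
Definition AlgA_lam (n : nat) (u : H) (th : R) : R :=
  min_div (alpha * `|u - y n.-1|) `|F u - F (y n.-1)|
    (Num.min ((1 + theta n.-1) / th * lam n.-1) lbar).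

(* tentative values of Step 2 *)
Definition AlgA_y2 (n : nat) : H := 2%:R *: x n - x n.-1.
Definition AlgA_l2 (n : nat) : R := AlgA_lam n (AlgA_y2 n) 1.
Definition AlgA_x2 (n : nat) : H := projC C (x n - AlgA_l2 n *: F (AlgA_y2 n)).

Definition AlgA_stop (n : nat) : Prop :=
  `|AlgA_y2 n - AlgA_x2 n| + `|x n - AlgA_y2 n| = 0.

Definition AlgA_t (n : nat) : R :=
  let y2 := AlgA_y2 n in let l2 := AlgA_l2 n in let x2 := AlgA_x2 n in
  - `|x2 - x n| ^+ 2 + 2%:R * l2 * ip (F y2) (y2 - x2)
  + (1 - alpha * (1 + Num.sqrt 2%:R)) * `|x n - y2| ^+ 2
  - alpha * `|x n - y n.-1| ^+ 2
  + (1 - Num.sqrt 2%:R * alpha) * `|x2 - y2| ^+ 2.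

(* final values of iteration n (n >= 1) after Steps 2-4 *)
Definition AlgA_step (n : nat) : Prop :=
  if `[< AlgA_stop n \/ AlgA_t n <= 0 >] then
    [/\ theta n = 1, y n = AlgA_y2 n, lam n = AlgA_l2 n & x n.+1 = AlgA_x2 n]
  else if lam n.-1 <= AlgA_l2 n then
    [/\ theta n = 1, y n = AlgA_y2 n, lam n.-1 <= lam n <= AlgA_l2 n,
        `|lam n *: F (y n) - lam n.-1 *: F (y n.-1)| <= alpha * `|y n - y n.-1| &
        x n.+1 = projC C (x n - lam n *: F (y n))]
  else
    [/\ 0 < theta n <= 1 /\ y n = x n + theta n *: (x n - x n.-1),
        theta n * lam n.-1 <= AlgA_lam n (y n) (theta n),
        theta n * lam n.-1 <= lam n <= AlgA_lam n (y n) (theta n),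
        `|lam n *: F (y n) - (theta n * lam n.-1) *: F (y n.-1)|
           <= alpha * `|y n - y n.-1| &
        x n.+1 = projC C (x n - lam n *: F (y n))].

(* (x,y,lam,theta) is a run of Algorithm A (iterations performed until it stops) *)
Definition AlgA_run (lam_m1 : R) : Prop :=
  AlgA_init lam_m1 /\
  forall n : nat, (1 <= n)%N -> (forall k, (1 <= k < n)%N -> ~ AlgA_stop k) ->
    AlgA_step n.

End AlgA.

(* Main.v *)
Require Import Defs.
From HB Require Import structures.
From mathcomp Require Import all_boot all_order all_algebra.
From mathcomp Require Import all_classical all_reals all_analysis.
From mathcomp Require Import ring lra.
Import Order.TTheory GRing.Theory Num.Theory.
Import numFieldNormedType.Exports.
Local Open Scope classical_set_scope.
Local Open Scope ring_scope.

Section IP.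
Variables (R : realType) (H : normedModType R) (ip : H -> H -> R).
Hypothesis hip : is_inner_product ip.

Let hip1 : forall x y, ip x y = ip y x.
Proof. by move: hip; rewrite /is_inner_product => -[]. Qed.
Let hip2 : forall (a : R) x y z, ip (a *: x + y) z = a * ip x z + ip y z.
Proof. by move: hip; rewrite /is_inner_product => -[]. Qed.
Let hip3 : forall x, ip x x = `|x| ^+ 2.
Proof. by move: hip; rewrite /is_inner_product => -[]. Qed.
Lemma ipC x y : ip x y = ip y x. Proof. exact: hip1. Qed.
Lemma ipDl x y z : ip (x + y) z = ip x z + ip y z.
Proof. by rewrite -{1}[x]scale1r hip2 mul1r. Qed.
Lemma ip0l z : ip 0 z = 0.
Proof. by move: (ipDl 0 0 z); rewrite addr0; lra. Qed.
Lemma ipZl a x z : ip (a *: x) z = a * ip x z.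
Proof. by rewrite -[a *: x]addr0 hip2 ip0l addr0. Qed.
Lemma ipNl x z : ip (- x) z = - ip x z.
Proof. by rewrite -scaleN1r ipZl mulN1r. Qed.
Lemma ipBl x y z : ip (x - y) z = ip x z - ip y z.
Proof. by rewrite ipDl ipNl. Qed.
Lemma ipDr x y z : ip z (x + y) = ip z x + ip z y.
Proof. by rewrite ipC ipDl !(ipC z). Qed.
Lemma ipZr a x z : ip z (a *: x) = a * ip z x.
Proof. by rewrite ipC ipZl ipC. Qed.
Lemma ipNr x z : ip z (- x) = - ip z x.
Proof. by rewrite ipC ipNl ipC. Qed.
Lemma ipBr x y z : ip z (x - y) = ip z x - ip z y.
Proof. by rewrite ipDr ipNr. Qed.
Lemma ipnn x : ip x x = `|x| ^+ 2. Proof. exact: hip3. Qed.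
Lemma normD2 x y : `|x + y| ^+ 2 = `|x| ^+ 2 + 2%:R * ip x y + `|y| ^+ 2.
Proof. rewrite -!ipnn ipDl !ipDr (ipC y x); ring. Qed.
Lemma normB2 x y : `|x - y| ^+ 2 = `|x| ^+ 2 - 2%:R * ip x y + `|y| ^+ 2.
Proof. by rewrite normD2 ipNr normrN; ring. Qed.

Lemma ip_young t u w : 2%:R * t * ip u w <= t ^+ 2 * `|u| ^+ 2 + `|w| ^+ 2.
Proof.
have := normB2 (t *: u) w; rewrite normrZ exprMn ipZl real_normK ?num_real //.
move=> e; have : 0 <= `|t *: u - w| ^+ 2 by rewrite exprn_ge0.
rewrite e; lra.
Qed.
End IP.

Lemma zid (V : zmodType) (v c p tc tp : V) : v - (tc + (p - tp)) = v - p - (tc - tp).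
Proof. by rewrite opprD opprB !addrA opprB addrA [RHS]addrAC [v - p - tc]addrAC [LHS]addrAC. Qed.

Section Proj.
Variables (R : realType) (H : normedModType R) (ip : H -> H -> R).
Hypothesis hip : is_inner_product ip.
Variable C : set H.
Hypothesis cvx : convex_set C.

Lemma conv_mem (c p : H) (t : R) : C c -> C p -> 0 <= t <= 1 ->
  C (t *: c + (1 - t) *: p).
Proof.
move=> Cc Cp /andP[t0 t1].
have := @cvx c p (Itv01 t0 t1) (mem_set Cc) (mem_set Cp).
by rewrite inE.
Qed.

Lemma proj_vi v p c : is_proj C v p -> C c -> ip (v - p) (c - p) <= 0.
Proof.
move=> [Cp hp] Cc; rewrite leNgt; apply/negP => a0.
set a := ip (v - p) (c - p) in a0 *.
set N := `|c - p| ^+ 2.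
have N0 : 0 <= N by rewrite exprn_ge0.
set t := a / (N + a).
have Na : 0 < N + a by lra.
have t0 : 0 < t by rewrite divr_gt0.
have t1 : t <= 1 by rewrite ler_pdivrMr // mul1r; lra.
have ht : 0 <= t <= 1 by rewrite (ltW t0) t1.
have := hp _ (conv_mem c p t Cc Cp ht).
have -> : v - (t *: c + (1 - t) *: p) = (v - p) - t *: (c - p).
  by rewrite scalerBl scale1r !scalerBr zid.
move=> hle.
have hsq : `|v - p| ^+ 2 <= `|v - p - t *: (c - p)| ^+ 2.
  by rewrite ler_pXn2r // nnegrE.
rewrite (@normB2 _ _ _ hip (v - p)) normrZ exprMn (@ipZr _ _ _ hip) -/a -/N ger0_norm ?(ltW t0) // in hsq.
have tNa : t * (N + a) = a by rewrite /t mulrAC -mulrA divff ?mulr1 // gt_eqF.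
nra.
Qed.
End Proj.

Set Implicit Arguments. Unset Strict Implicit.

Lemma sq_le (R : realType) (x y : R) : 0 <= x -> x <= y -> x ^+ 2 <= y ^+ 2.
Proof. by move=> x0 xy; nra. Qed.

Lemma aux_bnd (R : realType) (a b m d e1 e2 : R) : 0 <= a -> 0 <= b -> 0 <= d ->
  d <= m -> a < d + e1 -> b < d + e2 ->
  2%:R * a ^+ 2 + 2%:R * b ^+ 2 - 4%:R * m ^+ 2 <=
  2%:R * (d + e1) ^+ 2 + 2%:R * (d + e2) ^+ 2 - 4%:R * d ^+ 2.
Proof.
move=> a0 b0 d0 dm ha hb.
have := sq_le a0 (ltW ha); have := sq_le b0 (ltW hb).
have := sq_le d0 dm; lra.
Qed.

Lemma aux_c (R : realType) (d e1 e2 del eps x : R) : 0 <= d ->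
  0 < e1 -> e1 <= del -> 0 < e2 -> e2 <= del -> del <= 1 ->
  del * (8%:R * d + 8%:R) <= eps ^+ 2 -> 0 < eps -> 0 <= x ->
  x ^+ 2 <= 2%:R * (d + e1) ^+ 2 + 2%:R * (d + e2) ^+ 2 - 4%:R * d ^+ 2 -> x < eps.
Proof.
move=> d0 e10 e1d e20 e2d d1 hd eps0 x0 hx.
have h1 : e1 ^+ 2 <= del by nra.
have h2 : e2 ^+ 2 <= del by nra.
have h3 : d * e1 <= d * del by nra.
have h4 : d * e2 <= d * del by nra.
have : x ^+ 2 < eps ^+ 2 by nra.
by move=> h; nra.
Qed.

Lemma aux_l (R : realType) (a b c d e k : R) :
  a <= b + c -> b < d + k -> k < e / 2%:R -> c < e / 2%:R -> a <= d + e.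
Proof. move=> *; lra. Qed.

Section ProjEx.
Variables (R : realType) (H : completeNormedModType R) (ip : H -> H -> R).
Hypothesis hip : is_inner_product ip.
Variable C : set H.
Hypothesis cvx : convex_set C.
Hypothesis C0 : C !=set0.
Hypothesis clC : closed C.

Lemma paral (v x y : H) : `|x - y| ^+ 2 =
  2%:R * `|v - x| ^+ 2 + 2%:R * `|v - y| ^+ 2 - 4%:R * `|v - 2^-1 *: (x + y)| ^+ 2.
Proof.
rewrite -!(@ipnn _ _ _ hip) !(@ipBl _ _ _ hip) !(@ipBr _ _ _ hip) !(@ipZl _ _ _ hip).
rewrite !(@ipZr _ _ _ hip) !(@ipDl _ _ _ hip) !(@ipDr _ _ _ hip).
have := @ipC _ _ _ hip x y; have := @ipC _ _ _ hip v y; have := @ipC _ _ _ hip x v.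
lra.
Qed.

Lemma proj_exists v : exists p, is_proj C v p.
Proof.
have [c0 Cc0] := C0.
set D := [set `|v - c| | c in C].
have hinfD : has_inf D.
  split; first by exists `|v - c0|, c0.
  by exists 0 => _ [c _ <-].
set d := inf D.
have dlb c : C c -> d <= `|v - c|.
  by move=> Cc; apply: (ge_inf hinfD.2); exists c.
have d0 : 0 <= d by apply: lb_le_inf; [exact: hinfD.1| move=> _ [c _ <-]].
have ex n : exists c, C c /\ `|v - c| < d + n.+1%:R^-1.
  have e0 : 0 < n.+1%:R^-1 :> R by rewrite invr_gt0.
  have [_ [c Cc <-] he] := inf_adherent e0 hinfD.
  by exists c.
have [cs hcs] := choice ex.
have bnd i j : `|cs i - cs j| ^+ 2 <=
   2%:R * (d + i.+1%:R^-1) ^+ 2 + 2%:R * (d + j.+1%:R^-1) ^+ 2 - 4%:R * d ^+ 2.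
  rewrite (paral v).
  have Cm : C (2^-1 *: (cs i + cs j)).
    have -> : 2^-1 *: (cs i + cs j) = 2^-1 *: cs i + (1 - 2^-1) *: cs j.
      by rewrite scalerDr; congr (_ + _ *: _); field.
    apply: (@conv_mem _ _ _ cvx) ; [exact: (hcs i).1|exact: (hcs j).1|].
    by rewrite invr_ge0 ler0n /= invf_le1 ?ler1n.
  have h1 := dlb _ Cm.
  have [_ h2] := hcs i; have [_ h3] := hcs j.
  have e1 : 0 < i.+1%:R^-1 :> R by rewrite invr_gt0.
  have e2 : 0 < j.+1%:R^-1 :> R by rewrite invr_gt0.
  by apply: aux_bnd => //; apply: normr_ge0.
have hce : cauchy_ex (cs @ \oo).
  move=> eps eps0.
  set del := Num.min 1 (eps ^+ 2 / (8%:R * d + 8%:R)).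
  have p8 : 0 < 8%:R * d + 8%:R :> R by lra.
  have del0 : 0 < del by rewrite lt_min ltr01 divr_gt0 // exprn_gt0.
  have del1 : del <= 1 by rewrite ge_min lexx.
  have del2 : del * (8%:R * d + 8%:R) <= eps ^+ 2.
    by rewrite -ler_pdivlMr // ge_min lexx orbT.
  have [N _ hN] := nbhs_infty_gtr del^-1.
  have hk k : (N <= k)%N -> k.+1%:R^-1 < del.
    move=> hk; rewrite invf_plt ?unfold_in //= ?ltr0n //.
    apply: (lt_le_trans (hN k hk)); by rewrite ler_nat.
  exists (cs N); exists N => // j /= hj.
  rewrite -ball_normE /ball_ /=.
  apply: (aux_c d0 _ (ltW (hk N (leqnn N))) _ (ltW (hk j hj)) del1 del2 eps0).
  - by rewrite invr_gt0.
  - by rewrite invr_gt0.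
  - exact: normr_ge0.
  - exact: bnd.
have cv : cs @ \oo --> limn cs.
  by apply: cauchy_cvg; apply: cauchy_exP.
set p := limn cs in cv *.
have Cp : C p.
  apply: (@closed_cvg _ _ _ _ cs C clC _ p cv).
  by exists 0%N => // n _; exact: (hcs n).1.
exists p; split => // c Cc.
apply: le_trans (dlb _ Cc).
apply/ler_addgt0Pr => e e0.
have e2 : 0 < e / 2%:R by rewrite divr_gt0.
have := (cvgrPdist_lt _ _).1 cv _ e2.
move=> [N1 _ hN1].
have [N2 _ hN2] := nbhs_infty_gtr (e / 2%:R)^-1.
set k := maxn N1 N2.
have h1 := hN1 k (leq_maxl _ _).
have h2 := hN2 k (leq_maxr _ _).
have h3 : k.+1%:R^-1 < e / 2%:R.
  rewrite invf_plt ?unfold_in //= ?ltr0n //.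
  by apply: (lt_le_trans h2); rewrite ler_nat.
have [_ h4] := hcs k.
have h5 := ler_distD (cs k) v p.
rewrite distrC in h1.
exact: aux_l h5 h4 h3 h1.
Qed.
End ProjEx.

Section Core.
Variables (R : realType) (H : normedModType R) (ip : H -> H -> R).
Hypothesis hip : is_inner_product ip.
Variables (C : set H) (F : H -> H).
Hypothesis mon : monotone_op ip F.

Let ipnn' := @ipnn _ _ _ hip.
Let ipBl' := @ipBl _ _ _ hip.
Let ipBr' := @ipBr _ _ _ hip.
Let ipDl' := @ipDl _ _ _ hip.
Let ipDr' := @ipDr _ _ _ hip.
Let ipZl' := @ipZl _ _ _ hip.
Let ipZr' := @ipZr _ _ _ hip.
Let ipNl' := @ipNl _ _ _ hip.
Let ipNr' := @ipNr _ _ _ hip.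
Let ipC' := @ipC _ _ _ hip.

Ltac ipexp := rewrite -?ipnn'; repeat (progress rewrite ?ipBl' ?ipBr' ?ipDl' ?ipDr' ?ipZl' ?ipZr' ?ipNl' ?ipNr').

Lemma base (z xn xn1 yn : H) lam :
  (forall c, C c -> ip (xn - lam *: F yn - xn1) (c - xn1) <= 0) ->
  VI_sol ip C F z -> 0 <= lam ->
  `|xn1 - z| ^+ 2 <= `|xn - z| ^+ 2 - `|xn1 - xn| ^+ 2
     + 2%:R * lam * ip (F yn) (yn - xn1) - 2%:R * lam * ip (F z) (yn - z).
Proof.
move=> hp [Cz _] l0.
have h1 := hp _ Cz.
have h2 := mulr_ge0 l0 (mon yn z).
move: h1 h2; ipexp.
have := ipC' xn z; have := ipC' xn1 z; have := ipC' xn xn1.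
have := ipC' (F yn) z; have := ipC' (F yn) xn1; have := ipC' (F z) yn.
nra.
Qed.

Lemma eq_ler_sub (a b : R) : a <= b -> 0 <= b - a.
Proof. by rewrite subr_ge0. Qed.

Lemma key_ii (xm xn xn1 ym yn : H) lamm lam th :
  (forall c, C c -> ip (xm - lamm *: F ym - xn) (c - xn) <= 0) ->
  C xm -> C xn1 -> yn = xn + th *: (xn - xm) -> 0 < th ->
  - `|xn1 - xn| ^+ 2 + 2%:R * lam * ip (F yn) (yn - xn1) <=
  - `|xn - yn| ^+ 2 - `|xn1 - yn| ^+ 2
  + 2%:R * ip (lam *: F yn - (th * lamm) *: F ym) (yn - xn1).
Proof.
move=> hp Cxm Cxn1 hy th0.
set g := F yn; clearbody g; subst yn.
have ha : lamm * ip (F ym) (xn - xm) <= - `|xn - xm| ^+ 2.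
  have := hp _ Cxm; ipexp.
  have := ipC' xn xm; have := ipC' (F ym) xm; have := ipC' (F ym) xn. nra.
have hb : lamm * ip (F ym) (xn - xn1) <= ip (xn - xm) (xn1 - xn).
  have := hp _ Cxn1; ipexp.
  have := ipC' xn xm; have := ipC' (F ym) xn1; have := ipC' (F ym) xn;
  have := ipC' xn xn1; have := ipC' xm xn1. nra.
have hb' := mulr_ge0 (ltW th0) (eq_ler_sub hb).
have ha' := mulr_ge0 (mulr_ge0 (ltW th0) (ltW th0)) (eq_ler_sub ha).
move: ha' hb'; ipexp.
have := ipC' xn xm; have := ipC' (F ym) xn1; have := ipC' (F ym) xn;
have := ipC' xn xn1; have := ipC' xm xn1; have := ipC' (F ym) xm.
have := ipC' g xn1; have := ipC' g xm; have := ipC' g xn.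
nra.
Qed.
End Core.

Lemma fin (R : realType) (al r A B Cc U V P Q : R) : 0 < al -> 0 < r -> r ^+ 2 = 2%:R ->
  0 <= A -> 0 <= B -> 0 <= U ->
  Q <= - A ^+ 2 - Cc ^+ 2 + 2%:R * P ->
  2%:R * (r * al) * P <= (r * al) ^+ 2 * Cc ^+ 2 + U ^+ 2 ->
  U <= al * V -> V <= A + B ->
  Q <= - (1 - al * (1 + r)) * A ^+ 2 + al * B ^+ 2 - (1 - r * al) * Cc ^+ 2.
Proof.
move=> al0 r0 r2 A0 B0 U0 hQ hy hU hV.
have hUA : U <= al * (A + B) by apply: (le_trans hU); rewrite ler_pM2l.
have h1 : U ^+ 2 <= al ^+ 2 * (A + B) ^+ 2.
  by rewrite -exprMn; nra.
have h2 : al * (2%:R * r * P) <= al * (2%:R * al * Cc ^+ 2 + al * (A + B) ^+ 2).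
  move: hy; rewrite exprMn r2; nra.
have h3 : 2%:R * r * P <= 2%:R * al * Cc ^+ 2 + al * (A + B) ^+ 2.
  by move: h2; rewrite ler_pM2l.
have r1 : 1 <= r by nra.
have h4 : (A + B) ^+ 2 <= (r + 2%:R) * A ^+ 2 + r * B ^+ 2.
  have : 0 <= (r - 1) * ((r + 1) * A - B) ^+ 2 by apply: mulr_ge0; [lra|apply: sqr_ge0].
  have -> : (r - 1) * ((r + 1) * A - B) ^+ 2 =
     (r ^+ 2 - 1) * ((r + 1) * A ^+ 2 - 2%:R * A * B) + (r - 1) * B ^+ 2 by ring.
  rewrite r2; nra.
have h5 : r * (2%:R * P) <= r * (r * al * Cc ^+ 2 + al * (1 + r) * A ^+ 2 + al * B ^+ 2).
  have : al * (A + B) ^+ 2 <= al * ((r + 2%:R) * A ^+ 2 + r * B ^+ 2) by rewrite ler_pM2l.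
  nra.
have h6 : 2%:R * P <= r * al * Cc ^+ 2 + al * (1 + r) * A ^+ 2 + al * B ^+ 2.
  by move: h5; rewrite ler_pM2l.
lra.
Qed.

Section Core2.
Variables (R : realType) (H : normedModType R) (ip : H -> H -> R).
Hypothesis hip : is_inner_product ip.
Variables (C : set H) (F : H -> H).
Hypothesis mon : monotone_op ip F.

Local Notation r := (Num.sqrt (2%:R : R)).

Lemma Qb_ii (xm xn xn1 ym yn : H) lamm lam th al :
  (forall c, C c -> ip (xm - lamm *: F ym - xn) (c - xn) <= 0) ->
  C xm -> C xn1 -> yn = xn + th *: (xn - xm) -> 0 < th -> 0 < al ->
  `|lam *: F yn - (th * lamm) *: F ym| <= al * `|yn - ym| ->
  - `|xn1 - xn| ^+ 2 + 2%:R * lam * ip (F yn) (yn - xn1) <=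
  - (1 - al * (1 + r)) * `|xn - yn| ^+ 2 + al * `|xn - ym| ^+ 2
  - (1 - r * al) * `|xn1 - yn| ^+ 2.
Proof.
move=> hp Cxm Cxn1 hy th0 al0 hc.
have k := @key_ii R H ip hip C F xm xn xn1 ym yn lamm lam th hp Cxm Cxn1 hy th0.
have y := @ip_young _ _ _ hip (r * al) (yn - xn1) (lam *: F yn - (th * lamm) *: F ym).
rewrite (@ipC _ _ _ hip) (distrC yn xn1) in y.
have tri := ler_distD xn yn ym; rewrite (distrC yn xn) in tri.
have r0 : 0 < r by rewrite sqrtr_gt0 ltr0n.
have r2 : r ^+ 2 = 2%:R by rewrite sqr_sqrtr // ler0n.
exact: (fin al0 r0 r2 (normr_ge0 _) (normr_ge0 _) (normr_ge0 _) k y hc tri).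
Qed.

Lemma Qb_t (xn xn1 ym yn : H) lam al :
  - `|xn1 - xn| ^+ 2 + 2%:R * lam * ip (F yn) (yn - xn1)
  + (1 - al * (1 + r)) * `|xn - yn| ^+ 2 - al * `|xn - ym| ^+ 2
  + (1 - r * al) * `|xn1 - yn| ^+ 2 <= 0 ->
  - `|xn1 - xn| ^+ 2 + 2%:R * lam * ip (F yn) (yn - xn1) <=
  - (1 - al * (1 + r)) * `|xn - yn| ^+ 2 + al * `|xn - ym| ^+ 2
  - (1 - r * al) * `|xn1 - yn| ^+ 2.
Proof. move=> h; lra. Qed.

Lemma Qb_stop (xn xn1 ym yn : H) lam al : 0 <= al ->
  `|yn - xn1| + `|xn - yn| = 0 ->
  - `|xn1 - xn| ^+ 2 + 2%:R * lam * ip (F yn) (yn - xn1) <=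
  - (1 - al * (1 + r)) * `|xn - yn| ^+ 2 + al * `|xn - ym| ^+ 2
  - (1 - r * al) * `|xn1 - yn| ^+ 2.
Proof.
move=> al0 h.
have h1 : `|yn - xn1| = 0 by have := normr_ge0 (yn - xn1); have := normr_ge0 (xn - yn); lra.
have h2 : `|xn - yn| = 0 by have := normr_ge0 (yn - xn1); have := normr_ge0 (xn - yn); lra.
move/eqP: h1; rewrite normr_eq0 subr_eq0 => /eqP e1.
move/eqP: h2; rewrite normr_eq0 subr_eq0 => /eqP e2.
subst; rewrite (@ipBr _ _ _ hip) !subrr normr0.
have := mulr_ge0 al0 (sqr_ge0 `|xn1 - ym|); lra.
Qed.

Lemma main_ineq (z xn xn1 yn ym : H) lam al :
  (forall c, C c -> ip (xn - lam *: F yn - xn1) (c - xn1) <= 0) ->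
  VI_sol ip C F z -> 0 <= lam ->
  - `|xn1 - xn| ^+ 2 + 2%:R * lam * ip (F yn) (yn - xn1) <=
  - (1 - al * (1 + r)) * `|xn - yn| ^+ 2 + al * `|xn - ym| ^+ 2
  - (1 - r * al) * `|xn1 - yn| ^+ 2 ->
  `|xn1 - z| ^+ 2 <=
      `|xn - z| ^+ 2
      - (1 - al * (1 + r)) * `|xn - yn| ^+ 2
      - (1 - r * al) * `|xn1 - yn| ^+ 2
      + al * `|xn - ym| ^+ 2
      - 2%:R * lam * ip (F z) (yn - z).
Proof.
move=> hp hz l0 hQ.
have := base hip mon hp hz l0; lra.
Qed.
End Core2.

Unset Implicit Arguments. Set Strict Implicit.

Lemma min_div_ge0 (R : realType) (a b c : R) : 0 <= a -> 0 <= b -> 0 <= c -> 0 <= min_div a b c.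
Proof.
move=> a0 b0 c0; rewrite /min_div; case: eqP => // _.
by rewrite le_min c0 divr_ge0.
Qed.

Lemma y2E (R : realType) (H : normedModType R) (a b : H) :
  2%:R *: a - b = a + 1 *: (a - b).
Proof. by rewrite scale1r scaler_nat mulr2n addrA. Qed.

Theorem lemma4p5 (R : realType) (H : completeNormedModType R)
  (ip : H -> H -> R) (C : set H) (F : H -> H) (L : R)
  (alpha lbar lam_m1 : R) (x y : nat -> H) (lam theta : nat -> R) (z : H) :
  is_inner_product ip ->
  C !=set0 -> closed C -> convex_set C ->
  monotone_op ip F -> 0 < L -> lipschitz_op F L ->
  (exists s, VI_sol ip C F s) ->
  0 < alpha < Num.sqrt 2%:R - 1 -> 0 < lbar -> 0 < lam_m1 ->
  AlgA_run ip C F alpha lbar x y lam theta lam_m1 ->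
  VI_sol ip C F z ->
  forall n : nat, (1 <= n)%N ->
    (forall k, (1 <= k < n)%N -> ~ AlgA_stop C F alpha lbar x y lam theta k) ->
    `|x n.+1 - z| ^+ 2 <=
      `|x n - z| ^+ 2
      - (1 - alpha * (1 + Num.sqrt 2%:R)) * `|x n - y n| ^+ 2
      - (1 - Num.sqrt 2%:R * alpha) * `|x n.+1 - y n| ^+ 2
      + alpha * `|x n - y n.-1| ^+ 2
      - 2%:R * lam n * ip (F z) (y n - z).
Proof.
move=> hip C0 clC cvx mon _ _ _ /andP[al0 _] lb0 _ [[Cx0 th0 _ el0 ex1] hstep] hz n n1 nost.
have pspec v : is_proj C v (projC C v).
  have := proj_exists hip cvx C0 clC v. move=> hh. apply: xgetPex. exact: hh.
have pC v : C (projC C v) by have [] := pspec v.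
have pvi v c : C c -> ip (v - projC C v) (c - projC C v) <= 0.
  by move=> Cc; exact: (proj_vi _ _ _ hip _ cvx _ _ _ (pspec v) Cc).
have stepk k : (1 <= k <= n)%N -> AlgA_step ip C F alpha lbar x y lam theta k.
  move=> /andP[k1 kn]; apply: hstep => // j /andP[j1 jk]; apply: nost.
  by rewrite j1 /=; exact: (leq_trans jk kn).
have P1 k : (k <= n)%N -> x k.+1 = projC C (x k - lam k *: F (y k)).
  case: k => [|k] kn; first by [].
  have := stepk k.+1 _; rewrite kn /= => /(_ isT).
  rewrite /AlgA_step; case: asboolP => _.
    by case=> _ -> -> ->.
  case: ifP => _; first by case=> _ _ _ _ ->.
  by case=> _ _ _ _ ->.
have P2 k : (k <= n)%N -> 0 <= lam k /\ 0 <= theta k.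
  elim: k => [|k IH] kn.
    rewrite el0 th0; split; last by [].
    apply: min_div_ge0; [by rewrite mulr_ge0 // ltW|exact: normr_ge0|exact: ltW].
  have [l0 t0] := IH (ltnW kn).
  have := stepk k.+1 _; rewrite kn /= => /(_ isT).
  rewrite /AlgA_step; case: asboolP => _.
    case=> -> _ -> _; split => //.
    rewrite /AlgA_l2 /AlgA_lam /=.
    apply: min_div_ge0; [by rewrite mulr_ge0 // ltW|exact: normr_ge0|].
    rewrite le_min (ltW lb0) andbT divr1 mulr_ge0 //; lra.
  case: ifP => _.
    case=> -> _ /andP[h _] _ _; split => //; exact: le_trans h.
  case=> -[/andP[tp _] _] _ /andP[h _] _ _; split; last exact: ltW.
  apply: le_trans h; apply: mulr_ge0 => //; exact: ltW.
have P3 k : (k <= n.+1)%N -> C (x k).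
  case: k => [|k] kn; first by [].
  by rewrite (P1 k kn).
have en : n = n.-1.+1 by rewrite prednK.
have hp0 c : C c -> ip (x n.-1 - lam n.-1 *: F (y n.-1) - x n) (c - x n) <= 0.
  have e := P1 n.-1 (leq_pred n); rewrite -en in e.
  by rewrite e; exact: pvi.
have hp1 c : C c -> ip (x n - lam n *: F (y n) - x n.+1) (c - x n.+1) <= 0.
  by rewrite (P1 n (leqnn n)); exact: pvi.
have Cxm : C (x n.-1) by apply: P3; rewrite leqW // leq_pred.
have Cxn1 : C (x n.+1) by apply: P3.
apply: (main_ineq hip mon hp1 hz (P2 n (leqnn n)).1).
have := stepk n _; rewrite n1 leqnn /= => /(_ isT).
rewrite /AlgA_step; case: asboolP => [hs|_].
  case=> _ ey el ex; case: hs => [hst|ht].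
    rewrite /AlgA_stop -ey -ex in hst.
    exact: (Qb_stop hip F _ _ (ltW al0) hst).
  rewrite /AlgA_t /= -ey -el -ex in ht.
  exact: (@Qb_t R H ip F (x n) (x n.+1) (y n.-1) (y n) (lam n) alpha ht).
case: ifP => _.
  case=> _ ey _ hc ex.
  have hy : y n = x n + 1 *: (x n - x n.-1) by rewrite ey /AlgA_y2 y2E.
  rewrite -(mul1r (lam n.-1)) in hc.
  exact: (@Qb_ii R H ip hip C F (x n.-1) (x n) (x n.+1) (y n.-1) (y n) (lam n.-1) (lam n) 1 alpha hp0 Cxm Cxn1 hy ltr01 al0 hc).
case=> -[/andP[tp _] hy] _ _ hc ex.
exact: (@Qb_ii R H ip hip C F (x n.-1) (x n) (x n.+1) (y n.-1) (y n) (lam n.-1) (lam n) (theta n) alpha hp0 Cxm Cxn1 hy tp al0 hc).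
Qed.
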